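(* Let $\Phi=(A;\{E_i\}_{i=0}^d;A^*;\{E^*_i\}_{i=0}^d)$ be a tridiagonal system on $V$ with $d\ge1$, such that $(A,A^* )$ satisfies the $q$-Serre relations, with $E_iV$ the eigenspace of $A$ for $\theta_i=q^{2i-d}$ and $E^*_iV$ the eigenspace of $A^*$ for $\theta^*_i=q^{d-2i}$. Let $\{U_i\}_{i=0}^d$ be its split decomposition, $K:V\to V$ the linear map acting on $U_i$ as $q^{d-2i}I$, $t$ a scalar, $B=A$, $B^*=tA^*+(1-t)K$, $E'_i$ the primitive idempotent of $B^*$ for $\theta^*_i$, and $\Phi'=(B;\{E_i\}_{i=0}^d;B^*;\{E'_i\}_{i=0}^d)$. If $(\{\theta_i\}_{i=0}^d,\{\theta^*_i\}_{i=0}^d,\{\zeta_i\}_{i=0}^d)$ is the parameter array of $\Phi$, then the parameter array of $\Phi'$ is $(\{\theta_i\}_{i=0}^d,\{\theta^*_i\}_{i=0}^d,\{t^i\zeta_i\}_{i=0}^d)$.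
   Context: $\mathcal K$ is an algebraically closed field; $V$ is a nonzero finite-dimensional vector space over $\mathcal K$; $q\in\mathcal K$ is nonzero and not a root of unity; $[3]_q=q^2+1+q^{-2}$. The $q$-Serre relations for $(X,Y)$: $X^3Y-[3]_qX^2YX+[3]_qXYX^2-YX^3=0$ and $Y^3X-[3]_qY^2XY+[3]_qYXY^2-XY^3=0$. Primitive idempotent of a diagonalizable $X$ for eigenvalue $\lambda_i$: $\prod_{j\ne i}\frac{X-\lambda_jI}{\lambda_i-\lambda_j}$. A tridiagonal system on $V$ is a sequence $(A;\{E_i\}_{i=0}^d;A^*;\{E^*_i\}_{i=0}^d)$ with $A,A^*$ diagonalizable, $\{E_i\}$, $\{E^*_i\}$ orderings of their primitive idempotents, $E_iA^*E_j=0$ and $E^*_iAE^*_j=0$ when $|i-j|>1$, and no subspaces other than $0,V$ invariant under both $A$ and $A^*$. Split decomposition: $U_i=(E^*_0V+\cdots+E^*_iV)\cap(E_iV+\cdots+E_dV)$; known: $V=U_0\oplus\cdots\oplus U_d$. It is a fact (proved in the paper) that $B^*$ is diagonalizable with eigenvalues $\theta^*_0,\dots,\theta^*_d$ and $\dim E'_0V=1$. For a sequence $(X;\{F_i\};X^*;\{F^*_i\})$ with $X,X^*$ diagonalizable, $F_i$ (resp. $F^*_i$) the primitive idempotents of $X$ (resp. $X^*$) for eigenvalues $\lambda_i$ (resp. $\lambda^*_i$) and $\dim F^*_0V=1$: with $\tau_i(x)=\prod_{j=0}^{i-1}(x-\lambda_j)$, $F^*_0\tau_i(X)$ acts on $F^*_0V$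 as a scalar $\chi_i$; the split sequence is $\zeta_i=\prod_{j=1}^i(\lambda^*_0-\lambda^*_j)\chi_i$, and the parameter array is $(\{\lambda_i\},\{\lambda^*_i\},\{\zeta_i\})$. *)

(* Defs.v *)
(* Linear maps on V = 'rV[K]_N (N = n.+1 >= 1) are matrices
   acting on the RIGHT of row vectors: v |-> v *m M.  Hence the paper's
   composition "X Y" (first Y, then X) is the matrix product  Y *m X. *)
From HB Require Import structures.
From mathcomp Require Import all_boot all_order all_algebra.
Set Implicit Arguments. Unset Strict Implicit. Unset Printing Implicit Defensive.
Import Order.TTheory GRing.Theory Num.Theory.
Local Open Scope ring_scope.

Section Defs.
Variable (K : fieldType) (N : nat).

Definition prim_idem (X : 'M[K]_N) (lam : nat -> K) (d i : nat) : 'M[K]_N :=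
  \prod_(j < d.+1 | (j : nat) != i) ((lam i - lam j)^-1 *: (X - (lam j)%:M)).

(* X is diagonalizable and its eigenvalues are exactly the distinct scalars
   lam 0, ..., lam d (so {prim_idem X lam d i} is an ordering of its primitive
   idempotents). *)
Definition diag_eigseq (X : 'M[K]_N) (lam : nat -> K) (d : nat) : Prop :=
  diagonalizable X /\
  (forall i j, (i <= d)%N -> (j <= d)%N -> lam i = lam j -> i = j) /\
  (forall i, (i <= d)%N -> eigenvalue X (lam i)) /\
  (forall a, eigenvalue X a -> exists2 i, (i <= d)%N & a = lam i).

(* tridiagonal system (A; {E_i}; A*; {E*_i}) with E_i = prim_idem A th d i,
   E*_i = prim_idem As ths d i *)
Definition tridiagonal_system (d : nat) (A : 'M[K]_N) (th : nat -> K)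
    (As : 'M[K]_N) (ths : nat -> K) : Prop :=
  diag_eigseq A th d /\ diag_eigseq As ths d /\
  (forall i j, (i <= d)%N -> (j <= d)%N -> (i.+1 < j)%N || (j.+1 < i)%N ->
     (* E_i A* E_j = 0 *)
     prim_idem A th d j *m As *m prim_idem A th d i = 0) /\
  (forall i j, (i <= d)%N -> (j <= d)%N -> (i.+1 < j)%N || (j.+1 < i)%N ->
     (* E*_i A E*_j = 0 *)
     prim_idem As ths d j *m A *m prim_idem As ths d i = 0) /\
  (forall W : 'M[K]_N, stablemx W A -> stablemx W As ->
     (W == (0 : 'M[K]_N))%MS \/ row_full W).

Definition split_comp (d : nat) (A : 'M[K]_N) (th : nat -> K)
    (As : 'M[K]_N) (ths : nat -> K) (i : nat) : 'M[K]_N :=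
  ((\sum_(j < d.+1 | (j <= i)%N) prim_idem As ths d j) :&:
   (\sum_(j < d.+1 | (i <= j)%N) prim_idem A th d j))%MS.

Definition tau (X : 'M[K]_N) (lam : nat -> K) (i : nat) : 'M[K]_N :=
  \prod_(j < i) (X - (lam j)%:M).

Definition parameter_array (d : nat) (X : 'M[K]_N) (lam : nat -> K)
    (Xs : 'M[K]_N) (lams : nat -> K) (zeta : nat -> K) : Prop :=
  diag_eigseq X lam d /\ diag_eigseq Xs lams d /\
  \rank (prim_idem Xs lams d 0) = 1%N /\
  forall i, (i <= d)%N ->
    exists chi : K,
      (forall v : 'rV[K]_N, (v <= prim_idem Xs lams d 0)%MS ->
         v *m tau X lam i *m prim_idem Xs lams d 0 = chi *: v) /\
      zeta i = (\prod_(1 <= j < i.+1) (lams 0%N - lams j)) * chi.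

End Defs.

Definition qSerre (K : fieldType) (N : nat) (q : K) (X Y : 'M[K]_N) : Prop :=
  let q3 := q ^+ 2 + 1 + q ^- 2 in
  X ^+ 3 * Y - q3 *: (X ^+ 2 * Y * X) + q3 *: (X * Y * X ^+ 2) - Y * X ^+ 3 = 0 /\
  Y ^+ 3 * X - q3 *: (Y ^+ 2 * X * Y) + q3 *: (Y * X * Y ^+ 2) - X * Y ^+ 3 = 0.

(* Main.v *)
Require Import Defs.
From HB Require Import structures.
From mathcomp Require Import all_boot all_order all_algebra.
From mathcomp Require Import zify.
Set Implicit Arguments. Unset Strict Implicit. Unset Printing Implicit Defensive.
Import Order.TTheory GRing.Theory Num.Theory.
Local Open Scope ring_scope.
Section Gen.
Variables (K : fieldType) (N : nat).
Local Notation M := 'M[K]_N.+1.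

Lemma eig_prod (X : M) m (v : 'M[K]_(m, N.+1)) a (I : Type) (r : seq I)
   (P : pred I) (c F : I -> K) :
  v *m X = a *: v ->
  v *m \prod_(j <- r | P j) (c j *: (X - (F j)%:M)) =
  (\prod_(j <- r | P j) (c j * (a - F j))) *: v.
Proof.
move=> hv; elim: r => [|x r IH]; first by rewrite !big_nil mulmx1 scale1r.
rewrite !big_cons; case: (P x) => //.
rewrite -mulmxE mulmxA -scalemxAr mulmxBr hv mul_mx_scalar -scalerBl.
by rewrite -scalemxAl -scalemxAl IH !scalerA.
Qed.

Lemma eig_prod1 (X : M) m (v : 'M[K]_(m, N.+1)) a (I : Type) (r : seq I)
   (P : pred I) (F : I -> K) :
  v *m X = a *: v ->
  v *m \prod_(j <- r | P j) (X - (F j)%:M) =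
  (\prod_(j <- r | P j) (a - F j)) *: v.
Proof.
move=> hv; have := eig_prod r P (fun _ => 1) F hv.
by under eq_bigr do rewrite scale1r; under [in RHS]eq_bigr do rewrite mul1r.
Qed.

Lemma commXs (X : M) a b : GRing.comm (X - a%:M) (X - b%:M).
Proof.
have hs : forall (Y : M) c, GRing.comm Y (c%:M : M).
  by move=> Y c; rewrite /GRing.comm -!mulmxE; apply: scalar_mxC.
have h1 : GRing.comm (X - a%:M) X.
  apply: commr_sym; exact: (commrB (commr_refl X) (hs X a)).
apply: (commrB h1); exact: hs.
Qed.

Variables (X : M) (lam : nat -> K) (d : nat).
Hypothesis Hd : diag_eigseq X lam d.
Local Notation E := (prim_idem X lam d).

Lemma prim_scal i j m (v : 'M[K]_(m, N.+1)) : (i <= d)%N -> (j <= d)%N ->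
  v *m X = lam i *: v -> v *m E j = if i == j then v else 0.
Proof.
move: Hd => [_ [inj _]] hi hj hv; rewrite /prim_idem (eig_prod _ _ _ _ hv).
case: eqP => [<-|/eqP nij].
  rewrite big1 ?scale1r // => k /= hk; rewrite mulVf // subr_eq0.
  apply/eqP => /inj e; move: hk; rewrite e ?eqxx //; exact: (ltn_ord k).
have ii : (i < d.+1)%N by [].
rewrite (bigD1 (Ordinal ii)) /= ?subrr ?mulr0 ?mul0r ?scale0r //.
Qed.

Lemma full_eig : (1%:M <= \sum_(k < d.+1) eigenspace X (lam k))%MS.
Proof.
move: Hd => [/diagonalizablePeigen [rs _ hrs] [_ [_ hev]]].
rewrite -hrs; elim: rs {hrs} => [|r rs IH]; first by rewrite big_nil sub0mx.
rewrite big_cons addsmx_sub IH andbT.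
have [->|nz] := eqVneq (eigenspace X r) 0; first by rewrite sub0mx.
have [i hi ->] := hev r nz.
by apply: (sumsmx_sup (Ordinal (hi : (i < d.+1)%N))).
Qed.

Lemma sum_idem : (\sum_(k < d.+1) E k)%R = 1%:M.
Proof.
apply/eqP; rewrite eq_sym -subr_eq0 -submx0.
have: (1%:M <= kermx (1%:M - (\sum_(k < d.+1) E k)%R))%MS.
  apply: submx_trans full_eig _; apply/sumsmx_subP => i _.
  apply/sub_kermxP; rewrite mulmxBr mulmx1 mulmx_sumr.
  rewrite (bigD1 i) //= (prim_scal (leq_ord i) (leq_ord i)); last first.
    by apply/eigenspaceP.
  rewrite eqxx big1 ?addr0 ?subrr // => k /negPf nk.
  rewrite (prim_scal (leq_ord i) (leq_ord k)); last by apply/eigenspaceP.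
  by rewrite (_ : (i == k :> nat) = false) // eq_sym; exact: nk.
by move/sub_kermxP; rewrite mul1mx => ->; rewrite submx_refl.
Qed.

Lemma idem_eig j : (j <= d)%N -> E j *m X = lam j *: E j.
Proof.
move=> hj; apply/eigenspaceP.
rewrite -[E j]mul1mx; apply: submx_trans (submxMr _ full_eig) _.
rewrite sumsmxMr; apply/sumsmx_subP => i _.
rewrite (prim_scal (leq_ord i) hj); last by apply/eigenspaceP.
by case: eqP => [<-|]; rewrite ?sub0mx.
Qed.

Lemma eig_sub_idem i : (i <= d)%N -> (eigenspace X (lam i) <= E i)%MS.
Proof.
move=> hi; have := prim_scal (m := N.+1) (v := eigenspace X (lam i)) hi hi.
rewrite eqxx => <-; [exact: submxMl | by apply/eigenspaceP].
Qed.

Lemma idem_nz i : (i <= d)%N -> E i != 0.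
Proof.
move=> hi; move: Hd => [_ [_ [hev _]]]; apply/negP => /eqP e.
have := eig_sub_idem hi; rewrite e submx0 => /eqP e2.
by move: (hev i hi); rewrite /eigenvalue e2 eqxx.
Qed.

Lemma shift_eig (P Q : pred nat) i : (i <= d)%N ->
  (forall k, (k <= d)%N -> P k -> k != i -> Q k) ->
  ((\sum_(k < d.+1 | P k) E k)%MS *m (X - (lam i)%:M) <=
    \sum_(k < d.+1 | Q k) E k)%MS.
Proof.
move=> hi hPQ; rewrite sumsmxMr; apply/sumsmx_subP => k Pk.
rewrite mulmxBr (idem_eig (leq_ord k)) -[E k *m _]/(E k *m (lam i)%:M).
rewrite mul_mx_scalar -scalerBl.
have [eki|nki] := eqVneq (k : nat) i; first by rewrite eki subrr scale0r sub0mx.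
by apply: scalemx_sub; apply: (sumsmx_sup k) => //; exact: (hPQ k (leq_ord k) Pk nki).
Qed.

Lemma shift_tri (Y : M) (P Q : pred nat) :
  (forall i j, (i <= d)%N -> (j <= d)%N -> (i.+1 < j)%N || (j.+1 < i)%N ->
     E j *m Y *m E i = 0) ->
  (forall j k, (j <= d)%N -> (k <= d)%N -> P j -> (k <= j.+1)%N -> (j <= k.+1)%N -> Q k) ->
  ((\sum_(k < d.+1 | P k) E k)%MS *m Y <= \sum_(k < d.+1 | Q k) E k)%MS.
Proof.
move=> htri hPQ; rewrite sumsmxMr; apply/sumsmx_subP => j Pj.
rewrite -[_ *m Y]mulmx1 -sum_idem mulmx_sumr; apply: summx_sub => k _.
case: (boolP ((k.+1 < j)%N || (j.+1 < k)%N)) => hf.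
  by rewrite htri ?sub0mx ?leq_ord.
move: hf; rewrite negb_or -!leqNgt => /andP [h1 h2].
by apply: submx_trans (submxMl _ _) _; apply: (sumsmx_sup k) => //; exact: (hPQ j k (leq_ord j) (leq_ord k) Pj h2 h1).
Qed.

End Gen.

Section Chain.
Variables (K : fieldType) (N : nat).
Local Notation M := 'M[K]_N.+1.

Lemma mulmxA' m (u : 'M[K]_(m, N.+1)) (B C : M) : u *m (B * C) = u *m B *m C.
Proof. exact: mulmxA. Qed.

Lemma prod_nz (R : pzSemiRingType) d (F : nat -> R) :
  \prod_(j < d.+1 | (j : nat) != 0%N) F j = \prod_(1 <= j < d.+1) F j.
Proof.
rewrite big_mkcond big_ord_recl /= mul1r big_add1 /= big_mkord.
by apply: eq_bigr.
Qed.

Lemma chain_kill (X : M) (c : nat -> K) (S : nat -> M) d :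
  S 0%N *m (X - (c 0%N)%:M) = 0 ->
  (forall i, (0 < i)%N -> (i <= d)%N -> (S i *m (X - (c i)%:M) <= S i.-1)%MS) ->
  forall i, (i <= d)%N -> S i *m \prod_(k < d.+1) (X - (c k)%:M) = 0.
Proof.
move=> h0 hs.
have aux : forall i, (i <= d)%N -> S i *m \prod_(k < i.+1) (X - (c k)%:M) = 0.
  elim=> [|i IH] hi; first by rewrite big_ord1.
  rewrite big_ord_recr /=.
  have hc : GRing.comm (X - (c i.+1)%:M) (\prod_(k < i.+1) (X - (c k)%:M)).
    by apply: commr_prod => k _; apply: commXs.
  rewrite -hc -mulmxE mulmxA.
  have /submxP [D ->] := hs i.+1 isT hi.
  by rewrite -mulmxA IH ?mulmx0 // ltnW.
move=> i hi; rewrite -(big_mkord (fun _ => true) (fun k => X - (c k)%:M)) (big_cat_nat _ (n := i.+1)) //=.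
by rewrite big_mkord -mulmxE mulmxA aux // mul0mx.
Qed.

Lemma chain_rel (X Y : M) (c : nat -> K) (S : nat -> M) (t : K) d :
  (forall i, (0 < i)%N -> (i <= d)%N -> (S i *m (Y - (c i)%:M) <= S i.-1)%MS) ->
  (forall i, (i <= d)%N -> S i *m (X - (c i)%:M) = t *: (S i *m (Y - (c i)%:M))) ->
  forall i, (i <= d)%N -> forall m (u : 'M[K]_(m, N.+1)), (u <= S i)%MS ->
   u *m \prod_(1 <= k < i.+1) (X - (c k)%:M) =
     t ^+ i *: (u *m \prod_(1 <= k < i.+1) (Y - (c k)%:M)) /\
   (u *m \prod_(1 <= k < i.+1) (Y - (c k)%:M) <= S 0%N)%MS.
Proof.
move=> hs hr; elim=> [|i IH] hi m u hu.
  by rewrite !big_geq // !mulmx1 expr0 scale1r.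
rewrite [\prod_(1 <= k < i.+1.+1) (X - _)]big_nat_recr // [\prod_(1 <= k < i.+1.+1) (Y - _)]big_nat_recr //=.
have hcX : GRing.comm (X - (c i.+1)%:M) (\prod_(1 <= k < i.+1) (X - (c k)%:M)).
  by apply: commr_prod => k _; apply: commXs.
have hcY : GRing.comm (Y - (c i.+1)%:M) (\prod_(1 <= k < i.+1) (Y - (c k)%:M)).
  by apply: commr_prod => k _; apply: commXs.
rewrite -hcX -hcY !mulmxA'.
have hw : (u *m (Y - (c i.+1)%:M) <= S i)%MS.
  exact: submx_trans (submxMr _ hu) (hs i.+1 isT hi).
have [IH1 IH2] := IH (ltnW hi) _ _ hw.
split => //.
have hu' : u *m (X - (c i.+1)%:M) = t *: (u *m (Y - (c i.+1)%:M)).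
  move/submxP: hu => [D ->].
  by rewrite -!mulmxA hr // -scalemxAr.
by rewrite hu' -scalemxAl IH1 scalerA exprS.
Qed.

End Chain.
Lemma split_shift (K : fieldType) N m (u : 'M[K]_(m, N.+1)) (X : 'M[K]_N.+1) a b p
   (W : 'M[K]_(p, N.+1)) :
  (u *m (X - a%:M) <= W)%MS -> (u <= W)%MS -> (u *m (X - b%:M) <= W)%MS.
Proof.
move=> h1 h2.
have -> : u *m (X - b%:M) = u *m (X - a%:M) + (a - b) *: u.
  rewrite !mulmxBr -[u *m a%:M]/(u *m a%:M) -[u *m b%:M]/(u *m b%:M).
  rewrite !mul_mx_scalar scalerBl addrA subrK //.
by apply: addmx_sub => //; apply: scalemx_sub.
Qed.

Lemma split_shift0 (K : fieldType) N m (u : 'M[K]_(m, N.+1)) (X : 'M[K]_N.+1) a p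
   (W : 'M[K]_(p, N.+1)) :
  (u *m (X - a%:M) <= W)%MS -> (u <= W)%MS -> (u *m X <= W)%MS.
Proof.
move=> h1 h2.
have -> : u *m X = u *m (X - a%:M) + a *: u.
  by rewrite mulmxBr -[u *m a%:M]/(u *m a%:M) mul_mx_scalar subrK.
by apply: addmx_sub => //; apply: scalemx_sub.
Qed.

Lemma split_shiftB (K : fieldType) N m (u : 'M[K]_(m, N.+1)) (X : 'M[K]_N.+1) b p
   (W : 'M[K]_(p, N.+1)) :
  (u *m X <= W)%MS -> (u <= W)%MS -> (u *m (X - b%:M) <= W)%MS.
Proof.
move=> h1 h2.
rewrite mulmxBr -[u *m b%:M]/(u *m b%:M) mul_mx_scalar.
by apply: addmx_sub => //; rewrite -scaleNr; apply: scalemx_sub.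
Qed.

Section Main.
Variables (K : fieldType) (n : nat) (t : K) (A As Km : 'M[K]_n.+1) (d : nat)
  (th ths : nat -> K) (zeta : nat -> K).
Hypothesis Htri : tridiagonal_system d A th As ths.
Hypothesis HK : forall i, (i <= d)%N -> forall u : 'rV[K]_n.+1,
     (u <= split_comp d A th As ths i)%MS -> u *m Km = ths i *: u.
Hypothesis Hpa : parameter_array d A th As ths zeta.

Let DA : diag_eigseq A th d := proj1 Htri.
Let DAs : diag_eigseq As ths d := proj1 (proj2 Htri).
Let TA := proj1 (proj2 (proj2 Htri)).
Let TAs := proj1 (proj2 (proj2 (proj2 Htri))).
Let Irr := proj2 (proj2 (proj2 (proj2 Htri))).

Local Notation E := (prim_idem A th d).
Local Notation Es := (prim_idem As ths d).
Local Notation Ss i := (\sum_(k < d.+1 | (k <= i)%N) Es k)%MS.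
Local Notation T i := (\sum_(k < d.+1 | (i <= k)%N) E k)%MS.
Local Notation U := (split_comp d A th As ths).
Local Notation Bs := (t *: As + (1 - t) *: Km).

Lemma L_UA i : (i <= d)%N -> (U i *m (A - (th i)%:M) <= U i.+1)%MS.
Proof.
move=> hi; rewrite /split_comp sub_capmx; apply/andP; split.
  apply: submx_trans (submxMr _ (capmxSl _ _)) _.
  apply: split_shiftB.
    apply: (shift_tri (P := fun k => (k <= i)%N) (Q := fun k => (k <= i.+1)%N) DAs TAs) => j k hj hk hji h1 h2; lia.
  by apply/sumsmx_subP => k hk; apply: (sumsmx_sup k) => //; apply: leqW.
apply: submx_trans (submxMr _ (capmxSr _ _)) _.
by apply: (shift_eig (P := fun k => (i <= k)%N) (Q := fun k => (i.+1 <= k)%N) DA) => // k hk hik hki; rewrite ltn_neqAle eq_sym hki.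
Qed.

Lemma L_UAs i : (i <= d)%N ->
  (U i *m (As - (ths i)%:M) <= (\sum_(k < d.+1 | (k < i)%N) Es k)%MS :&: T i.-1)%MS.
Proof.
move=> hi; rewrite sub_capmx; apply/andP; split.
  apply: submx_trans (submxMr _ (capmxSl _ _)) _.
  apply: (shift_eig (P := fun k => (k <= i)%N) (Q := fun k => (k < i)%N) DAs) => // k hk hik hki.
  by rewrite ltn_neqAle hki.
apply: submx_trans (submxMr _ (capmxSr _ _)) _.
apply: split_shiftB.
  apply: (shift_tri (P := fun k => (i <= k)%N) (Q := fun k => (i.-1 <= k)%N) DA TA) => j k hj hk hji h1 h2; lia.
by apply/sumsmx_subP => k hk; apply: (sumsmx_sup k) => //; apply: leq_trans hk; apply: leq_pred.
Qed.

Lemma L_UAs_pos i : (0 < i)%N -> (i <= d)%N -> (U i *m (As - (ths i)%:M) <= U i.-1)%MS.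
Proof.
move=> h0 hi; apply: submx_trans (L_UAs hi) _.
rewrite /split_comp; apply: capmxS => //.
by apply/sumsmx_subP => k hk; apply: (sumsmx_sup k) => //; lia.
Qed.

Lemma L_UAs0 : U 0%N *m (As - (ths 0%N)%:M) = 0.
Proof.
apply/eqP; rewrite -submx0; apply: submx_trans (L_UAs (leq0n d)) _.
by rewrite big_pred0 ?capmxSl // => k; rewrite ltn0.
Qed.

Lemma L_UK i : (i <= d)%N -> U i *m Km = ths i *: U i.
Proof.
move=> hi; apply/row_matrixP => r; rewrite row_mul linearZ /=; apply: HK => //.
exact: row_sub.
Qed.

Lemma L_UKm i m (u : 'M[K]_(m, n.+1)) : (i <= d)%N -> (u <= U i)%MS -> u *m Km = ths i *: u.
Proof.
by move=> hi /submxP [D ->]; rewrite -mulmxA L_UK // scalemxAr.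
Qed.

Lemma L_UB i : (i <= d)%N ->
  U i *m (Bs - (ths i)%:M) = t *: (U i *m (As - (ths i)%:M)).
Proof.
move=> hi; rewrite !mulmxBr -[U i *m (ths i)%:M]/(U i *m (ths i)%:M) mul_mx_scalar.
rewrite mulmxDr -!scalemxAr L_UK // scalerBr scalerBl scale1r.
by rewrite [ths i *: U i - _]addrC addrA addrK.
Qed.

Lemma L_T0 : row_full (T 0%N).
Proof.
rewrite -sub1mx -(sum_idem DA); apply: summx_sub => k _.
by apply: (sumsmx_sup k).
Qed.

Lemma L_Ss0 : (Ss 0%N <= Es 0%N)%MS.
Proof. by apply/sumsmx_subP => k; rewrite leqn0 => /eqP ->. Qed.

Lemma L_U0eq : (U 0%N :=: Ss 0%N)%MS.
Proof. by apply/capmx_idPl; apply: submx_full; apply: L_T0. Qed.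

Lemma L_U0Es m (w : 'M[K]_(m, n.+1)) : (w <= U 0%N)%MS -> (w <= Es 0%N)%MS.
Proof. by move=> h; apply: submx_trans L_Ss0; rewrite -L_U0eq. Qed.

Lemma L_U0nz : U 0%N != 0.
Proof.
apply/negP => /eqP h; have := idem_nz DAs (leq0n d); apply/negP; rewrite negbK.
rewrite -submx0 -h L_U0eq; exact: (sumsmx_sup ord0).
Qed.

Lemma wB m (w : 'M[K]_(m, n.+1)) : (w <= U 0%N)%MS ->
  w *m As = ths 0%N *: w /\ w *m Bs = ths 0%N *: w.
Proof.
move=> hw.
have h1 : w *m As = ths 0%N *: w.
  apply/eigenspaceP; apply: submx_trans (L_U0Es hw) _.
  by apply/eigenspaceP; apply: (idem_eig DAs).
split=> //.
rewrite mulmxDr -!scalemxAr h1 (L_UKm (leq0n d) hw) !scalerA -scalerDl.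
by rewrite -mulrDl addrC subrK mul1r.
Qed.

Local Notation W := (\sum_(i < d.+1) U i)%MS.

Lemma L_UW i : (i <= d.+1)%N -> (U i <= W)%MS.
Proof.
rewrite leq_eqVlt => /orP [/eqP ->|hi]; last exact: (sumsmx_sup (Ordinal hi)).
apply: submx_trans (capmxSr _ _) _.
by rewrite big_pred0 ?sub0mx // => k; rewrite leqNgt ltn_ord.
Qed.

Lemma L_Wfull : row_full W.
Proof.
have hS1 : stablemx W A.
  rewrite sumsmxMr; apply/sumsmx_subP => i _.
  apply: (split_shift0 (a := th i)).
    by apply: submx_trans (L_UA (leq_ord i)) (L_UW _).
  exact: (L_UW (leqW (leq_ord i))).
have hS2 : stablemx W As.
  rewrite sumsmxMr; apply/sumsmx_subP => i _.
  apply: (split_shift0 (a := ths i)); last exact: (L_UW (leqW (leq_ord i))).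
  case: (posnP i) => [h0|hp].
    by move: (i : nat) h0 => j ->; rewrite L_UAs0 sub0mx.
  apply: submx_trans (L_UAs_pos hp (leq_ord i)) (L_UW _).
  by apply: leq_trans (leq_pred _) _; apply: leqW; apply: leq_ord.
case: (Irr hS1 hS2) => // h; move: L_U0nz; rewrite -submx0 => /negP; case.
by apply: submx_trans (L_UW (leq0n _)) _; case/andP: h.
Qed.

Lemma AnnB : \prod_(k < d.+1) (Bs - (ths k)%:M) = 0.
Proof.
have hk := chain_kill (S := U) (X := Bs) (c := ths).
have h0 : U 0%N *m (Bs - (ths 0%N)%:M) = 0 by rewrite L_UB // L_UAs0 scaler0.
have hs : forall i, (0 < i)%N -> (i <= d)%N -> (U i *m (Bs - (ths i)%:M) <= U i.-1)%MS.
  by move=> i h0' hi; rewrite L_UB //; apply: scalemx_sub; apply: L_UAs_pos.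
apply/eqP; rewrite -submx0 -[X in (X <= _)%MS]mul1mx.
have h1 : (1%:M <= W)%MS by rewrite sub1mx; exact: L_Wfull.
apply: submx_trans (submxMr _ h1) _.
rewrite sumsmxMr; apply/sumsmx_subP => i _.
by rewrite (hk d h0 hs i (leq_ord i)) sub0mx.
Qed.

Lemma hsB i : (0 < i)%N -> (i <= d)%N -> (U i *m (As - (ths i)%:M) <= U i.-1)%MS.
Proof. exact: L_UAs_pos. Qed.

Lemma Prel i : (i <= d)%N -> forall m (u : 'M[K]_(m, n.+1)), (u <= U i)%MS ->
  u *m prim_idem Bs ths d 0 = t ^+ i *: (u *m Es 0%N).
Proof.
move=> hi m u hu.
rewrite /prim_idem !scaler_prod -!scalemxAr (prod_nz d (fun j => (ths 0%N - ths j)^-1)) (prod_nz d (fun j => Bs - (ths j)%:M)) (prod_nz d (fun j => As - (ths j)%:M)).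
rewrite (big_cat_nat _ (n := i.+1) (F := fun j => Bs - (ths j)%:M)) //= ?ltnS // (big_cat_nat _ (n := i.+1) (F := fun j => As - (ths j)%:M)) //= ?ltnS //.
rewrite !mulmxA'.
have [h1 h2] := chain_rel (X := Bs) (Y := As) (c := ths) (S := U) (t := t) hsB L_UB hi hu.
rewrite h1 -scalemxAl.
have [wA wB'] := wB h2.
rewrite (eig_prod1 _ _ _ wB') (eig_prod1 _ _ _ wA).
by rewrite !scalerA; congr (_ *: _); rewrite mulrCA mulrA.
Qed.

Lemma L_tau i : (i <= d)%N -> (U 0%N *m tau A th i <= U i)%MS.
Proof.
elim: i => [|i IH] hi; first by rewrite /tau big_ord0 mulmx1.
rewrite /tau big_ord_recr /= mulmxA'.
exact: submx_trans (submxMr _ (IH (ltnW hi))) (L_UA (ltnW hi)).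
Qed.

Lemma P_le_U0 : (prim_idem Bs ths d 0 <= U 0%N)%MS.
Proof.
rewrite -[X in (X <= _)%MS]mul1mx.
have h1 : (1%:M <= W)%MS by rewrite sub1mx; exact: L_Wfull.
apply: submx_trans (submxMr _ h1) _.
rewrite sumsmxMr; apply/sumsmx_subP => i _.
rewrite (Prel (leq_ord i) (submx_refl _)); apply: scalemx_sub.
rewrite L_U0eq; apply: submx_trans (submxMl _ _) _.
exact: (sumsmx_sup ord0).
Qed.

Lemma U0_le_P : (U 0%N <= prim_idem Bs ths d 0)%MS.
Proof.
have := Prel (leq0n d) (submx_refl (U 0%N)); rewrite expr0 scale1r.
have [wA _] := wB (submx_refl (U 0%N)).
rewrite (prim_scal DAs (leq0n d) (leq0n d) wA) eqxx => <-.
exact: submxMl.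
Qed.

Lemma rankP : \rank (prim_idem Bs ths d 0) = 1%N.
Proof.
have [_ [_ [rk _]]] := Hpa.
apply/eqP; rewrite eqn_leq; apply/andP; split.
  by rewrite -rk; apply: mxrankS; exact: L_U0Es P_le_U0.
apply: leq_trans (mxrankS U0_le_P); rewrite lt0n mxrank_eq0; exact: L_U0nz.
Qed.

Local Notation Sp k := (\sum_(l < d.+1 | (l <= k)%N) U l)%MS.

Lemma hUS l k : (l <= d)%N -> (l <= k)%N -> (U l <= Sp k)%MS.
Proof. by move=> hl hk; apply: (sumsmx_sup (Ordinal (hl : (l < d.+1)%N))). Qed.

Lemma EVB i : (i <= d)%N -> eigenvalue Bs (ths i).
Proof.
move=> hi; case: (posnP i) => [->|hp].
  rewrite /eigenvalue; apply/negP => /eqP h0.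
  have := L_U0nz; apply/negP; rewrite negbK -submx0 -h0.
  by apply/eigenspaceP; have [] := wB (submx_refl (U 0%N)).
rewrite /eigenvalue /eigenspace kermx_eq0; apply/negP => hfree.
have hji : (Sp i.-1 <= Sp i)%MS.
  apply/sumsmx_subP => l hl; apply: hUS (leq_ord l) _.
  exact: leq_trans hl (leq_pred _).
have h1 : (Sp i *m (Bs - (ths i)%:M) <= Sp i.-1)%MS.
  rewrite sumsmxMr; apply/sumsmx_subP => l hl.
  have hld : (l <= d)%N := leq_ord l.
  have [eli|nli] := eqVneq (l : nat) i.
    rewrite eli L_UB //; apply: scalemx_sub.
    by apply: submx_trans (L_UAs_pos hp hi) (hUS _ _) => //; apply: leq_trans (leq_pred _) hi.
  have hli : (l < i)%N by rewrite ltn_neqAle nli.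
  apply: (split_shift (a := ths l)); last by apply: hUS => //; rewrite -ltnS prednK.
  rewrite L_UB //; apply: scalemx_sub.
  case: (posnP l) => [hl0|hlp].
    by move: hld; rewrite hl0 => hld; rewrite L_UAs0 sub0mx.
  apply: submx_trans (L_UAs_pos hlp hld) (hUS _ _) => //; first by apply: leq_trans (leq_pred _) hld.
  by rewrite -ltnS prednK // (ltn_predK hli).
have hr : (\rank (Sp i) <= \rank (Sp i.-1))%N.
  by rewrite -(mxrankMfree _ hfree); exact: mxrankS h1.
have hij : (Sp i <= Sp i.-1)%MS.
  by rewrite -(mxrank_leqif_sup hji).2 eqn_leq hr mxrankS.
have hSA : stablemx (Sp i.-1) A.
  rewrite sumsmxMr; apply/sumsmx_subP => l hl.
  have hld : (l <= d)%N := leq_ord l.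
  have hli : (l < i)%N by rewrite -(prednK hp) ltnS.
  apply: (split_shift0 (a := th l)); last exact: hUS.
  apply: submx_trans (L_UA hld) _; apply: submx_trans hij.
  by apply: hUS; [exact: leq_trans hli hi | exact: hli].
have hSAs : stablemx (Sp i.-1) As.
  rewrite sumsmxMr; apply/sumsmx_subP => l hl.
  have hld : (l <= d)%N := leq_ord l.
  apply: (split_shift0 (a := ths l)); last exact: hUS.
  case: (posnP l) => [hl0|hlp].
    by move: hld; rewrite hl0 => hld; rewrite L_UAs0 sub0mx.
  apply: submx_trans (L_UAs_pos hlp hld) (hUS _ _); first by apply: leq_trans (leq_pred _) hld.
  by apply: leq_trans (leq_pred _) hl.
have hnz : (U 0%N <= Sp i.-1)%MS by apply: hUS.
case: (Irr hSA hSAs) => [/andP [h0 _]|hf].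
  by move: L_U0nz; rewrite -submx0 (submx_trans hnz h0).
have hEs : (Es i <= Ss i.-1)%MS.
  apply: submx_trans (submx_full _ hf) _.
  apply/sumsmx_subP => l hl; apply: submx_trans (capmxSl _ _) _.
  apply/sumsmx_subP => k hk; apply: (sumsmx_sup k) => //.
  exact: leq_trans hk hl.
have hEi : Es i *m Es i = Es i.
  by rewrite (prim_scal DAs hi hi (idem_eig DAs hi)) eqxx.
have := submxMr (Es i) hEs; rewrite hEi sumsmxMr => hle.
have : (Es i <= (0 : 'M[K]_n.+1))%MS.
  apply: submx_trans hle _; apply/sumsmx_subP => k hk.
  rewrite (prim_scal DAs (leq_ord k) hi (idem_eig DAs (leq_ord k))).
  have -> : ((k : nat) == i) = false.
    by apply/negbTE; rewrite neq_ltn; apply/orP; left; rewrite -(prednK hp) ltnS.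
  exact: sub0mx.
by rewrite submx0; apply/negP; exact: (idem_nz DAs hi).
Qed.

Lemma EVB2 a : eigenvalue Bs a -> exists2 i, (i <= d)%N & a = ths i.
Proof.
move/eigenvalueP => [v hv nz].
have := congr1 (mulmx v) AnnB; rewrite mulmx0 (eig_prod1 _ _ _ hv) => /eqP.
rewrite scalemx_eq0 (negPf nz) orbF => /prodf_eq0 [k _ /eqP hk].
by exists k; [exact: leq_ord | apply/eqP; rewrite -subr_eq0 hk].
Qed.

Lemma diagB : diagonalizable Bs.
Proof.
apply/diagonalizableP; exists [seq ths k | k <- iota 0 d.+1].
  rewrite map_inj_in_uniq ?iota_uniq // => x y.
  rewrite !mem_iota /= !add0n !ltnS => hx hy; exact: (proj1 (proj2 DAs)) x y hx hy.
apply: mxminpoly_min; rewrite big_map rmorph_prod.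
under eq_bigr do rewrite rmorphB /= horner_mx_X horner_mx_C.
have -> : iota 0 d.+1 = index_iota 0 d.+1 by rewrite /index_iota subn0.
by rewrite big_mkord; exact: AnnB.
Qed.

Lemma main_pa : parameter_array d A th Bs ths (fun i => t ^+ i * zeta i).
Proof.
have [_ [_ [_ Hz]]] := Hpa.
split; first exact: DA.
split.
  split; first exact: diagB.
  split; first exact: (proj1 (proj2 DAs)).
  by split; [exact: EVB | exact: EVB2].
split; first exact: rankP.
move=> i hi; have [chi [hchi hz]] := Hz i hi.
exists (t ^+ i * chi); split.
  move=> v hv.
  have hv0 : (v <= U 0%N)%MS := submx_trans hv P_le_U0.
  have hvt : (v *m tau A th i <= U i)%MS := submx_trans (submxMr _ hv0) (L_tau hi).
  by rewrite (Prel hi hvt) hchi ?scalerA //; exact: L_U0Es hv0.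
by rewrite hz mulrCA.
Qed.

End Main.

Unset Implicit Arguments.

Theorem corollary7p11 (K : closedFieldType) (n : nat) (q t : K)
    (A As Km : 'M[K]_n.+1) (d : nat) (zeta : nat -> K) :
  q != 0 -> (forall m : nat, (0 < m)%N -> q ^+ m != 1) ->
  (1 <= d)%N ->
  let th := fun i : nat => q ^ ((2 * i)%:Z - d%:Z) in
  let ths := fun i : nat => q ^ (d%:Z - (2 * i)%:Z) in
  tridiagonal_system d A th As ths ->
  qSerre q A As ->
  (forall i, (i <= d)%N -> forall u : 'rV[K]_n.+1,
     (u <= split_comp d A th As ths i)%MS -> u *m Km = ths i *: u) ->
  parameter_array d A th As ths zeta ->
  let B := A in
  let Bs := t *: As + (1 - t) *: Km in
  parameter_array d B th Bs ths (fun i => t ^+ i * zeta i).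
Proof.
move=> _ _ _ th ths htri _ hK hpa B Bs.
exact: main_pa.
Qed.
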